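(* Let $r\in\mathbb{Z}$, let $P(r)$ be the lower-triangular matrix with $(n,k)$ entry $[x^n]\,\frac{1+rx^2}{1+x^2}\left(\frac{x}{1+x^2}\right)^k$, let $M(r)=P(r)^{-1}$, and let $s_n(r)=\sum_{k=0}^n M(r)_{n,k}$ be the row sums of $M(r)$. Then the Hankel transform of $s_n(r)$ is $$H_n(r):=\det\big(s_{i+j}(r)\big)_{0\le i,j\le n}= r^n U_n\left(\frac{\frac{1}{r}-1}{2}\right)\quad\text{for all } n\ge 0,$$ where $U_n$ is the Chebyshev polynomial of the second kind and the right-hand side is understood as the polynomial in $r$ it defines.
   Context: $[x^n]h(x)$ denotes the coefficient of $x^n$ in $h(x)$. $U_n$ is the Chebyshev polynomial of the second kind ($U_0=1$, $U_1(y)=2y$, $U_{n}(y)=2yU_{n-1}(y)-U_{n-2}(y)$); $r^nU_n\left(\frac{1/r-1}{2}\right)$ is a polynomial in $r$ (beginning $1,\ 1-r,\ 1-2r,\ r^3+r^2-3r+1,\ldots$). $M(r)$ is the moment matrix of the restricted Chebyshev–Boubaker polynomials, equal to the Riordan array $\left(\frac{\sqrt{1-4x^2}(r-1)+r+1}{2(r+x^2(r-1)^2)}, \frac{1-\sqrt{1-4x^2}}{2x}\right)$. *)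

(* Defs.v *)
From HB Require Import structures.
From mathcomp Require Import all_boot all_order all_algebra.
Set Implicit Arguments. Unset Strict Implicit. Unset Printing Implicit Defensive.
Import Order.TTheory GRing.Theory Num.Theory.
Local Open Scope ring_scope.

(* Truncation of the power series 1/(1+x^2) = sum_j (-x^2)^j up to degree 2N
   (exact in all coefficients of degree <= N). *)
Definition geomInv (N : nat) : {poly rat} :=
  \sum_(j < N.+1) ((-1) ^+ j) *: 'X^(2 * j).

(* P(r)_{n,k} = [x^n] (1 + r x^2)/(1+x^2) * (x/(1+x^2))^k
             = [x^n] (1 + r x^2) * x^k * (1/(1+x^2))^(k+1). *)
Definition Pentry (r : int) (n k : nat) : rat :=
  ((1 + r%:~R *: 'X^2) * 'X^k * (geomInv n) ^+ k.+1)`_n.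

Definition Pmx (r : int) (N : nat) : 'M[rat]_N.+1 :=
  \matrix_(i < N.+1, j < N.+1) Pentry r i j.

(* M(r) = P(r)^{-1}; for a lower-triangular matrix, the entries (n,k), k <= n,
   of the inverse are those of the inverse of the leading block. *)
Definition Ment (r : int) (n k : nat) : rat :=
  (invmx (Pmx r n)) (inord n) (inord k).

Definition srow (r : int) (n : nat) : rat := \sum_(k < n.+1) Ment r n k.

Definition hankel (r : int) (n : nat) : rat :=
  \det (\matrix_(i < n.+1, j < n.+1) srow r (i + j)).

Fixpoint chebU2 (n : nat) : {poly rat} * {poly rat} :=
  match n with
  | 0 => (1, 'X *+ 2)
  | m.+1 => let (a, b) := chebU2 m in (b, 'X *+ 2 * b - a)
  end.
Definition chebU (n : nat) : {poly rat} := (chebU2 n).1.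

(* r^n U_n((1/r - 1)/2), as the polynomial in r it defines:
   with U_n = sum_k c_k y^k (deg U_n = n),
   r^n U_n((1/r-1)/2) = sum_k c_k r^(n-k) ((1-r)/2)^k. *)
Definition rhsU (r : rat) (n : nat) : rat :=
  \sum_(k < n.+1) (chebU n)`_k * r ^+ (n - k) * ((1 - r) / 2) ^+ k.

(* Main.v *)
Require Import Defs.
From HB Require Import structures.
From mathcomp Require Import all_boot all_order all_algebra.
From mathcomp Require Import zify ring.
Set Implicit Arguments. Unset Strict Implicit. Unset Printing Implicit Defensive.
Import Order.TTheory GRing.Theory Num.Theory.
Local Open Scope ring_scope.

Definition Jop (rr : rat) (u : nat -> rat) (x : nat) : rat :=
  match x with
  | 0 => u 1%N
  | 1 => (1 - rr) * u 0%N + u 2%N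
  | k.+2 => u k.+1 + u k.+3
  end.
Definition Jpow rr l u := iter l (Jop rr) u.
Definition act rr (c : nat -> rat) (N : nat) u x := \sum_(l < N) c l * Jpow rr l u x.
Definition shiftf (c : nat -> rat) k := if k is k'.+1 then c k' else 0.
Definition gam (rr : rat) (m : nat) : rat := if m == 1%N then 1 - rr else 1.

Lemma Jop_sum rr (I : finType) (c : I -> rat) (f : I -> nat -> rat) x :
  Jop rr (fun y => \sum_i c i * f i y) x = \sum_i c i * Jop rr (f i) x.
Proof.
case: x => [|[|k]] /=; rewrite ?big_distrr -?big_split //=; apply: eq_bigr => i _; ring.
Qed.

Lemma Jop_ext rr u w x : (forall y, u y = w y) -> Jop rr u x = Jop rr w x.
Proof. by move=> h; case: x => [|[|k]] /=; rewrite !h. Qed.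

Lemma JpowS rr l u x : Jpow rr l.+1 u x = Jop rr (Jpow rr l u) x.
Proof. by []. Qed.

Lemma Jpow_ext rr l u w x : (forall y, u y = w y) -> Jpow rr l u x = Jpow rr l w x.
Proof.
elim: l x => [|l IH] x h; first exact: h.
by rewrite !JpowS; apply: Jop_ext => y; apply: IH.
Qed.

Lemma JpowSr rr l u x : Jpow rr l.+1 u x = Jpow rr l (Jop rr u) x.
Proof. by rewrite /Jpow iterSr. Qed.

Lemma JpowD rr k l u x : Jpow rr (k + l) u x = Jpow rr k (Jpow rr l u) x.
Proof. by rewrite /Jpow iterD. Qed.

Lemma Jpow_sum rr l (I : finType) (c : I -> rat) (f : I -> nat -> rat) x :
  Jpow rr l (fun y => \sum_i c i * f i y) x = \sum_i c i * Jpow rr l (f i) x.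
Proof.
elim: l x => [|l IH] x; first by [].
rewrite JpowS (Jop_ext _ _ IH).
by rewrite Jop_sum.
Qed.

Lemma act_ext rr c N u w x : (forall y, u y = w y) -> act rr c N u x = act rr c N w x.
Proof. by move=> h; apply: eq_bigr => l _; rewrite (Jpow_ext _ _ _ h). Qed.

Lemma actS rr c N u x : act rr (shiftf c) N.+1 u x = act rr c N (Jop rr u) x.
Proof.
rewrite /act big_ord_recl /= mul0r add0r; apply: eq_bigr => l _.
by rewrite add0n -JpowS JpowSr.
Qed.

Lemma actS' rr c N u x : act rr (shiftf c) N.+1 u x = Jop rr (act rr c N u) x.
Proof.
rewrite /act big_ord_recl /= mul0r add0r Jop_sum; apply: eq_bigr => l _.
by rewrite add0n.
Qed.

Lemma act_sub rr c d a N u x :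
  act rr (fun k => c k - a * d k) N u x = act rr c N u x - a * act rr d N u x.
Proof.
rewrite /act mulr_sumr -sumrB; apply: eq_bigr => l _; ring.
Qed.

Lemma act_widen rr c N M u x : (N <= M)%N -> (forall l, (N <= l)%N -> c l = 0) ->
  act rr c M u x = act rr c N u x.
Proof.
move=> NM h; rewrite /act -(subnKC NM) big_split_ord /= [X in _ + X]big1 ?addr0 // => l _.
by rewrite h ?mul0r // leq_addr.
Qed.

Fixpoint pc2 (rr : rat) (n : nat) : (nat -> rat) * (nat -> rat) :=
  match n with
  | 0 => (fun k => (k == 0%N)%:R, fun k => (k == 1%N)%:R)
  | m.+1 => ((pc2 rr m).2, fun k => shiftf (pc2 rr m).2 k - gam rr m.+1 * (pc2 rr m).1 k)
  end.
Definition pc rr n := (pc2 rr n).1.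

Lemma pc0 rr k : pc rr 0 k = (k == 0%N)%:R. Proof. by []. Qed.
Lemma pc1 rr k : pc rr 1 k = (k == 1%N)%:R. Proof. by []. Qed.
Lemma pcSS rr n k : pc rr n.+2 k = shiftf (pc rr n.+1) k - gam rr n.+1 * pc rr n k.
Proof. by []. Qed.

Lemma pc_tri2 rr n : ((forall k, (n < k)%N -> pc rr n k = 0) /\ pc rr n n = 1) /\
      ((forall k, (n.+1 < k)%N -> pc rr n.+1 k = 0) /\ pc rr n.+1 n.+1 = 1).
Proof.
elim: n => [|n [[IH0 IH0'] [IH1 IH2]]].
  split; split => //; first by case.
  by case=> [|[|k]].
split; first by [].
split.
  case=> [//|k] hk; rewrite pcSS /= IH1 // IH0 ?mulr0 ?subr0 //.
  by apply: ltn_trans hk.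
by rewrite pcSS /= IH2 IH0 ?mulr0 ?subr0.
Qed.

Lemma pc_van rr n k : (n < k)%N -> pc rr n k = 0.
Proof. by case: (pc_tri2 rr n) => [[h _] _]; apply: h. Qed.
Lemma pc_diag rr n : pc rr n n = 1.
Proof. by case: (pc_tri2 rr n) => [[_ h] _]. Qed.

Lemma act_pcSS rr n M u x : act rr (pc rr n.+2) M u x =
  act rr (shiftf (pc rr n.+1)) M u x - gam rr n.+1 * act rr (pc rr n) M u x.
Proof. exact: (act_sub rr (shiftf (pc rr n.+1)) (pc rr n) (gam rr n.+1)). Qed.

Lemma act_pc_widen rr n M u x : (n < M)%N -> act rr (pc rr n) M u x = act rr (pc rr n) n.+1 u x.
Proof. by move=> h; apply: act_widen => // l hl; apply: pc_van. Qed.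

Lemma act_pc0 rr n u : act rr (pc rr n) n.+1 u 0 = u n.
Proof.
suff: forall u, act rr (pc rr n) n.+1 u 0 = u n /\ act rr (pc rr n.+1) n.+2 u 0 = u n.+1.
  by move=> /(_ u) [].
elim: n => [|n IH] {}u.
  split; first by rewrite /act big_ord1 /= mul1r.
  by rewrite /act !big_ord_recr big_ord0 /= add0r mul0r add0r mul1r.
split; first by case: (IH u).
rewrite act_pcSS actS.
case: (IH (Jop rr u)) => _ ->.
rewrite (@act_pc_widen rr n n.+3); last by lia.
case: (IH u) => -> _.
by case: n {IH} => [|n] /=; rewrite /gam /=; ring.
Qed.

Definition cc (rr : rat) (k : nat) : rat := if k is 0 then 1 else 1 - rr + k%:R * (1 + rr).
Definition Vf (rr : rat) (j x : nat) : rat :=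
  if j == 0%N then 1 else if (x < j)%N then cc rr x else if x == j then cc rr j - rr else cc rr j.

Ltac bash_ifs :=
  repeat (case: ifP => ?);
  try (exfalso; lia);
  repeat match goal with H : is_true (_ == _) |- _ => move/eqP: H => H end;
  try subst;
  rewrite /cc /=; try ring.

Lemma Vrec rr j x : Vf rr j.+2 x = Jop rr (Vf rr j.+1) x - gam rr j.+1 * Vf rr j x.
Proof.
rewrite /Vf /gam /=.
case: x => [|[|x]] /=; case: j => [|j] /=; bash_ifs.
Qed.

Definition one : nat -> rat := fun _ => 1.

Lemma act_rec rr j M u x : (j.+2 < M)%N ->
  act rr (pc rr j.+2) M u x =
  Jop rr (act rr (pc rr j.+1) j.+2 u) x - gam rr j.+1 * act rr (pc rr j) j.+1 u x.
Proof.
move=> hM; rewrite (act_pc_widen _ _ _ hM) act_pcSS actS'.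
by rewrite (@act_pc_widen rr j j.+3); last by lia.
Qed.

Lemma v_closed rr j x : act rr (pc rr j) j.+1 one x = Vf rr j x.
Proof.
suff: forall x, act rr (pc rr j) j.+1 one x = Vf rr j x /\
               act rr (pc rr j.+1) j.+2 one x = Vf rr j.+1 x.
  by move=> /(_ x) [].
elim: j => [|j IH] {}x.
  split; first by rewrite /act big_ord1 /= mul1r.
  rewrite /act !big_ord_recr big_ord0 /=.
  rewrite /Vf /=; case: x => [|[|x]] /=; rewrite /one /cc !pc1 /=; ring.
split; first by case: (IH x).
rewrite act_rec // Vrec; congr (_ - _ * _); last by case: (IH x).
by apply: Jop_ext => y; case: (IH y).
Qed.

Definition Wf rr j x : rat := Vf rr j x - (if j is j'.+1 then 1 else 0) * Vf rr j.-1 x.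
Definition Tf rr i j : rat := Wf rr j i - (if i is i'.+1 then 1 else 0) * Wf rr j i.-1.

Lemma Tf_far rr i j : ((i.+1 < j) || (j.+1 < i))%N -> Tf rr i j = 0.
Proof.
rewrite /Tf /Wf /Vf.
case: i => [|[|i]]; case: j => [|[|j]] /= h; bash_ifs.
Qed.

Lemma Tf00 rr : Tf rr 0 0 = 1.
Proof. by rewrite /Tf /Wf /Vf /=; ring. Qed.
Lemma Tf01 rr : Tf rr 0 1 = 0.
Proof. by rewrite /Tf /Wf /Vf /cc /=; ring. Qed.
Lemma Tf10 rr : Tf rr 1 0 = 0.
Proof. by rewrite /Tf /Wf /Vf /cc /=; ring. Qed.
Lemma Tf_diag rr m : Tf rr m.+1 m.+1 = 1 - rr.
Proof. rewrite /Tf /Wf /Vf; case: m => [|m] /=; bash_ifs. Qed.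
Lemma Tf_up rr m : Tf rr m.+1 m.+2 = rr.
Proof. rewrite /Tf /Wf /Vf; case: m => [|m] /=; bash_ifs. Qed.
Lemma Tf_lo rr m : Tf rr m.+2 m.+1 = rr.
Proof. rewrite /Tf /Wf /Vf; case: m => [|m] /=; bash_ifs. Qed.

Definition Dk (f : nat -> nat -> rat) k := \det (\matrix_(i < k, j < k) f i j).

Lemma minor_max (f : nat -> nat -> rat) k :
  row' ord_max (col' ord_max (\matrix_(i < k.+1, j < k.+1) f i j)) = \matrix_(i < k, j < k) f i j.
Proof. by apply/matrixP => i j; rewrite !mxE !lift_max. Qed.

Lemma sgnNN (a : nat) : (-1) ^+ (a + a) = 1 :> rat.
Proof. by rewrite exprD -exprMn mulrNN mulr1 expr1n. Qed.
Lemma sgnNS (a : nat) : (-1) ^+ (a + a.+1) = -1 :> rat.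
Proof. by rewrite addnS exprS sgnNN mulr1. Qed.

Lemma tridiag (f : nat -> nat -> rat) m :
  (forall i j, (i.+1 < j)%N || (j.+1 < i)%N -> f i j = 0) ->
  Dk f m.+2 = f m.+1 m.+1 * Dk f m.+1 - f m m.+1 * f m.+1 m * Dk f m.
Proof.
move=> hf; rewrite /Dk (expand_det_col _ ord_max) !big_ord_recr /=.
rewrite big1 ?add0r; last first.
  move=> i _; rewrite mxE hf ?mul0r //=.
  have := ltn_ord i; lia.
rewrite /cofactor minor_max !mxE /=.
set B := row' _ _.
rewrite (expand_det_row _ ord_max) big_ord_recr /= big1 ?add0r; last first.
  move=> j _; rewrite !mxE hf ?mul0r //.
  rewrite lift_max /= /bump /= leqnn add1n; have := ltn_ord j; lia.
have -> : B ord_max ord_max = f m.+1 m.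
  by rewrite /B !mxE lift_max /= /bump leqnn add1n.
rewrite /cofactor.
have -> : row' ord_max (col' ord_max B) = \matrix_(i < m, j < m) f i j.
  apply/matrixP => i j; rewrite /B !mxE !lift_max /= /bump.
  have hi : (m <= i)%N = false by rewrite leqNgt (ltn_ord i).
  by rewrite hi add0n hi add0n.
rewrite /= !sgnNN sgnNS; ring.
Qed.

Lemma chebU2S n : chebU2 n.+1 = ((chebU2 n).2, 'X *+ 2 * (chebU2 n).2 - (chebU2 n).1).
Proof. by rewrite /=; case: (chebU2 n). Qed.

Lemma chebUSS n : chebU n.+2 = 'X *+ 2 * chebU n.+1 - chebU n.
Proof. by rewrite /chebU chebU2S [chebU2 n.+1]chebU2S. Qed.
Lemma chebU0 : chebU 0 = 1. Proof. by []. Qed.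
Lemma chebU1 : chebU 1 = 'X *+ 2. Proof. by []. Qed.

Lemma chebU_coef n k : (chebU n.+2)`_k =
  (if k is k'.+1 then 2 * (chebU n.+1)`_k' else 0) - (chebU n)`_k.
Proof.
rewrite chebUSS coefB mulrnAl coefMn coefXM.
by case: k => [|k] /=; rewrite ?mul0rn // mulr_natl.
Qed.

Lemma chebU_van n k : (n < k)%N -> (chebU n)`_k = 0.
Proof.
suff: forall k, ((n < k)%N -> (chebU n)`_k = 0) /\ ((n.+1 < k)%N -> (chebU n.+1)`_k = 0).
  by move=> /(_ k) [].
elim: n => [|n IH] {}k.
  rewrite chebU0 chebU1; split => h; first by rewrite coefC; case: k h.
  by rewrite coefMn coefX; case: k h => [|[|k]].
split; first by case: (IH k).
move=> h; rewrite chebU_coef; case: k h => [//|k] h.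
rewrite (proj2 (IH k)) ?(proj1 (IH k.+1)) ?mulr0 ?subr0 //; lia.
Qed.

Lemma rhsU0 rr : rhsU rr 0 = 1.
Proof. by rewrite /rhsU big_ord1 /= chebU0 coefC /= !mulr1. Qed.

Lemma rhsU1 rr : rhsU rr 1 = 1 - rr.
Proof.
rewrite /rhsU !big_ord_recr big_ord0 /= chebU1 !coefMn !coefX /=.
by rewrite add0r mul0rn mul0r add0r expr0 mulr1 expr1; field.
Qed.

Lemma rhsUSS rr n : rhsU rr n.+2 = (1 - rr) * rhsU rr n.+1 - rr ^+ 2 * rhsU rr n.
Proof.
rewrite /rhsU.
under eq_bigr => k _ do rewrite chebU_coef mulrBl mulrBl.
rewrite sumrB; congr (_ - _).
  rewrite big_ord_recl /= mul0r mul0r add0r mulr_sumr; apply: eq_bigr => k _.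
  by rewrite /bump /= add0n add1n subSS exprS; field.
rewrite big_ord_recr [X in X + _ = _]big_ord_recr /=.
rewrite (@chebU_van n n.+1) // (@chebU_van n n.+2) // !mul0r !addr0 mulr_sumr.
apply: eq_bigr => k _.
have hk := ltn_ord k.
have -> : (n.+2 - k = (n - k) + 2)%N by lia.
rewrite exprD; ring.
Qed.

Lemma Tf_tri rr i j : (i.+1 < j)%N || (j.+1 < i)%N -> Tf rr i j = 0.
Proof. exact: Tf_far. Qed.

Lemma DT1 rr : Dk (Tf rr) 1 = 1.
Proof. by rewrite /Dk det_mx11 mxE Tf00. Qed.

Lemma DT rr n : Dk (Tf rr) n.+1 = rhsU rr n.
Proof.
suff: Dk (Tf rr) n.+1 = rhsU rr n /\ Dk (Tf rr) n.+2 = rhsU rr n.+1 by case.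
elim: n => [|n [IH1 IH2]].
  rewrite DT1 rhsU0 rhsU1; split => //.
  rewrite tridiag; last exact: Tf_tri.
  by rewrite DT1 Tf01 Tf_diag; ring.
split => //.
rewrite tridiag; last exact: Tf_tri.
by rewrite IH1 IH2 Tf_diag Tf_up Tf_lo rhsUSS; ring.
Qed.

Definition Qp (rr : rat) N k : {poly rat} := (1 + rr *: 'X^2) * 'X^k * geomInv N ^+ k.+1.

Lemma geom_id N : (1 + 'X^2) * geomInv N = 1 + ((-1) ^+ N) *: 'X^(2 * N.+1) :> {poly rat}.
Proof.
elim: N => [|N IH].
  by rewrite /geomInv big_ord1 /= !expr0 !scale1r ?muln0 ?muln1 ?expr0 mulr1.
rewrite /geomInv big_ord_recr /=.
rewrite (_ : \sum_(i < N.+1) _ = geomInv N) // mulrDr IH.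
have -> : (2 * N.+2 = 2 * N.+1 + 2)%N by lia.
rewrite exprD (exprS (-1) N) -!mul_polyC polyCM polyCN polyC1.
ring.
Qed.

Lemma QpS rr N k : (1 + 'X^2) * Qp rr N k.+1 =
  'X * Qp rr N k * (1 + ((-1) ^+ N) *: 'X^(2 * N.+1)).
Proof. rewrite -geom_id /Qp (exprS 'X k) (exprS (geomInv N) k.+1) -!mul_polyC; ring. Qed.

Lemma Qp0 rr N : (1 + 'X^2) * Qp rr N 0 =
  (1 + rr *: 'X^2) * (1 + ((-1) ^+ N) *: 'X^(2 * N.+1)).
Proof. rewrite -geom_id /Qp expr0 expr1 mulr1 -!mul_polyC; ring. Qed.

Lemma coefL (p : {poly rat}) n :
  ((1 + 'X^2) * p)`_n = p`_n + (if (n < 2)%N then 0 else p`_(n - 2)).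
Proof. by rewrite mulrDl mul1r coefD coefXnM. Qed.

Lemma coefR (q : {poly rat}) N c n : (n <= N)%N ->
  (q * (1 + c *: 'X^(2 * N.+1)))`_n = q`_n.
Proof.
move=> h; rewrite mulrDr mulr1 coefD -scalerAr coefZ coefMXn ifT ?mulr0 ?addr0 //.
lia.
Qed.

Lemma QpS_coef rr N k n : (n <= N)%N ->
  (Qp rr N k.+1)`_n + (if (n < 2)%N then 0 else (Qp rr N k.+1)`_(n - 2)) =
  (if n == 0%N then 0 else (Qp rr N k)`_n.-1).
Proof. by move=> h; rewrite -coefL QpS coefR // coefXM. Qed.

Lemma Qp0_coef rr N n : (n <= N)%N ->
  (Qp rr N 0)`_n + (if (n < 2)%N then 0 else (Qp rr N 0)`_(n - 2)) =
  (n == 0%N)%:R + rr * (n == 2%N)%:R.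
Proof. by move=> h; rewrite -coefL Qp0 coefR // coefD coef1 coefZ coefXn. Qed.

Lemma Qpc rr N n k : (n <= N)%N -> (Qp rr N k)`_n = pc rr n k.
Proof.
elim/ltn_ind: n k => n IH k hn.
case: n IH hn => [|[|m]] IH hn.
- case: k => [|k].
    by have := Qp0_coef rr hn; rewrite /= addr0 => ->; rewrite /pc /=; ring.
  by have := QpS_coef rr k hn; rewrite /= addr0 => ->; rewrite /pc /=.
- case: k => [|k].
    by have := Qp0_coef rr hn; rewrite /= addr0 => ->; rewrite /pc /=; ring.
  have := QpS_coef rr k hn; rewrite /= addr0 => ->; rewrite IH //.
- have hm : (m <= N)%N by lia.
  have hm1 : (m.+1 <= N)%N by lia.
  case: k => [|k].
    have := Qp0_coef rr hn; rewrite /= ?subSS ?subn0 => h.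
    apply: (@addIr _ ((Qp rr N 0)`_m)); rewrite h IH // pcSS /=.
    case: m {IH hn hm hm1 h} => [|m] /=; rewrite /gam /=.
      by rewrite /pc /=; ring.
    ring.
  have := QpS_coef rr k hn; rewrite /= ?subSS ?subn0 => h.
  apply: (@addIr _ ((Qp rr N k.+1)`_m)); rewrite h !IH // pcSS /=.
  by case: m {IH hn hm hm1 h} => [|m] /=; rewrite /gam /= /pc /=; ring.
Qed.

Definition sig rr k := Jpow rr k one 0%N.

Lemma Pmx_pc r N : Pmx r N = \matrix_(i < N.+1, j < N.+1) pc (r%:~R) i j.
Proof. by apply/matrixP => i j; rewrite !mxE /Pentry (Qpc _ _ (leqnn i)). Qed.

Lemma pc_mx_det rr N : \det (\matrix_(i < N.+1, j < N.+1) pc rr i j) = 1.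
Proof.
rewrite det_trig; last by apply/is_trig_mxP => i j h; rewrite mxE pc_van.
by rewrite big1 // => i _; rewrite mxE pc_diag.
Qed.

Lemma srow_sig r k : srow r k = sig (r%:~R) k.
Proof.
set rr : rat := r%:~R.
set P := Pmx r k.
have hu : P \in unitmx by rewrite unitmxE /P Pmx_pc pc_mx_det unitr1.
pose sv : 'cV[rat]_k.+1 := \col_(j < k.+1) sig rr j.
have hP : P *m sv = const_mx 1.
  apply/matrixP => i z; rewrite !mxE /P Pmx_pc.
  under eq_bigr => j _ do rewrite !mxE.
  transitivity (act rr (pc rr i) k.+1 one 0%N); first by [].
  rewrite (@act_widen rr (pc rr i) i.+1 k.+1 one 0%N (ltn_ord i) (fun l hl => pc_van rr hl)).
  by rewrite act_pc0.
have e : invmx P *m const_mx 1 = sv by rewrite -hP mulKmx.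
have := congr1 (fun M : 'cV_k.+1 => M ord_max 0) e.
rewrite /= !mxE => <-.
rewrite /srow /Ment; apply: eq_bigr => j _; rewrite !mxE mulr1.
by congr (invmx P _ _); apply: val_inj; rewrite /= inordK.
Qed.

Definition arow rr i k : rat := pc rr i k - (if i is _.+1 then 1 else 0) * pc rr i.-1 k.

Lemma act_arow rr i N u x : (i < N)%N ->
  act rr (arow rr i) N u x =
  act rr (pc rr i) i.+1 u x - (if i is _.+1 then 1 else 0) * act rr (pc rr i.-1) i.-1.+1 u x.
Proof.
move=> h; rewrite (act_sub rr (pc rr i) (pc rr i.-1)) (act_pc_widen _ _ _ h).
by rewrite (@act_pc_widen rr i.-1 N) //; apply: leq_ltn_trans h; apply: leq_pred.
Qed.

Lemma Wf_act rr j N y : (j < N)%N -> act rr (arow rr j) N one y = Wf rr j y.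
Proof. by move=> h; rewrite act_arow // !v_closed. Qed.

Lemma Tf_act rr i N w : (i < N)%N -> act rr (arow rr i) N w 0%N =
  w i - (if i is _.+1 then 1 else 0) * w i.-1.
Proof. by move=> h; rewrite act_arow // !act_pc0. Qed.

Lemma hankel_T rr n :
  let A := \matrix_(i < n.+1, k < n.+1) arow rr i k in
  let H := \matrix_(i < n.+1, j < n.+1) sig rr (i + j) in
  A *m H *m A^T = \matrix_(i < n.+1, j < n.+1) Tf rr i j.
Proof.
move=> A H; apply/matrixP => i j; rewrite !mxE.
under eq_bigr => l _ do rewrite !mxE big_distrl /=.
rewrite exchange_big /=.
transitivity (\sum_(k < n.+1) arow rr i k *
   Jpow rr k (fun y => \sum_(l < n.+1) arow rr j l * Jpow rr l one y) 0%N).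
  apply: eq_bigr => k _; rewrite Jpow_sum mulr_sumr; apply: eq_bigr => l _.
  rewrite !mxE /sig JpowD; ring.
rewrite (_ : \sum_(k < n.+1) _ = act rr (arow rr i) n.+1
            (fun y => act rr (arow rr j) n.+1 one y) 0%N) //.
rewrite Tf_act // !Wf_act //.
Qed.

Lemma arow_det rr n : \det (\matrix_(i < n.+1, k < n.+1) arow rr i k) = 1.
Proof.
rewrite det_trig; last first.
  apply/is_trig_mxP => i j h; rewrite mxE /arow !pc_van ?mulr0 ?subr0 //.
  by apply: leq_ltn_trans h; apply: leq_pred.
rewrite big1 // => i _; rewrite mxE /arow pc_diag.
by case: i => [[|m] hm] /=; rewrite ?mul0r ?subr0 // pc_van ?mulr0 ?subr0.
Qed.

Theorem mainTheorem6 (r : int) (n : nat) :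
  hankel r n = rhsU (r%:~R) n.
Proof.
set rr : rat := r%:~R.
rewrite /hankel.
have -> : \matrix_(i < n.+1, j < n.+1) srow r (i + j) =
          \matrix_(i < n.+1, j < n.+1) sig rr (i + j).
  by apply/matrixP => i j; rewrite !mxE srow_sig.
rewrite -DT /Dk -(hankel_T rr n) !det_mulmx det_tr arow_det; ring.
Qed.
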